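(* Let $x$ be a propositional variable and $\bot$ denote the constant $0$. Then (i) $x\leftrightarrow(\Box x)^2,\ \Box(x\leftrightarrow(\Box x)^2),\ \neg\Diamond\Box\bot\ \vdash_{4\mathcal{K}_{\omega\text{Ł}}}\ \neg x\vee x$; and (ii) $x\leftrightarrow(\Box x)^2,\ \Box(x\leftrightarrow(\Box x)^2),\ \neg\Diamond\Box\bot\ \not\vdash_{4\mathcal{K}_{\text{Ł}}}\ \neg x\vee x$.
   Context: $[0,1]_{\text{Ł}}$ is the standard MV-algebra on $[0,1]$ ($\wedge=\min$, $\vee=\max$, $a\cdot b=\max\{0,a+b-1\}$, $a\to b=\min\{1,1-a+b\}$, constants $0,1$); for $n\ge1$, $MV_n$ is its subalgebra on $\{0,\frac1n,\dots,\frac nn\}$. Modal formulas use $\wedge,\vee,\cdot,\to,0,1,\Box,\Diamond$; $x^2=x\cdot x$, $\neg x=x\to0$, $x\leftrightarrow y=(x\to y)\cdot(y\to x)$. An $\mathbf{A}$-Kripke model is $\langle W,R,e\rangle$ with $W\ne\emptyset$, crisp $R\subseteq W^2$, $e$ valuing variables at worlds in $\mathbf{A}$, extended world-wise homomorphically and by $e(v,\Box\varphi)=\inf_{Rvw}e(w,\varphi)$, $e(v,\Diamond\varphi)=\sup_{Rvw}e(w,\varphi)$ (the model being safe, i.e. these exist). $4\mathcal{K}_{\text{Ł}}$ is the class of $[0,1]_{\text{Ł}}$-Kripke models with transitive $R$; $4\mathcal{K}_{\omega\text{Ł}}$ is the class of safe Kripke models with transitive $R$ over some $MV_n$, $n\in\omega$.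 $\Gamma\vdash_{\mathcal{C}}\varphi$ means: for every model in $\mathcal{C}$ and world $v$, if all formulas of $\Gamma$ have value $1$ at $v$ then $\varphi$ has value $1$ at $v$. *)

(* Defs.v *)
From Stdlib Require Import Reals List.
Open Scope R_scope.

Inductive form : Type :=
| FVar : nat -> form
| FBot : form
| FTop : form
| FAnd : form -> form -> form
| FOr  : form -> form -> form
| FMul : form -> form -> form
| FImp : form -> form -> form
| FBox : form -> form
| FDia : form -> form.

Definition FSq (a : form) : form := FMul a a.
Definition FNeg (a : form) : form := FImp a FBot.
Definition FIff (a b : form) : form := FMul (FImp a b) (FImp b a).

(* Carriers of the MV-algebras, as subsets of the reals:
   [0,1]_L and MV_n = {0, 1/n, ..., n/n}.  Operations are the
   Lukasiewicz ones restricted to the carrier. *)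
Definition A_L (x : R) : Prop := 0 <= x <= 1.
Definition A_MV (n : nat) (x : R) : Prop :=
  exists k : nat, (k <= n)%nat /\ x = INR k / INR n.

Definition is_inf_in (A : R -> Prop) (S : R -> Prop) (r : R) : Prop :=
  A r /\ (forall s, S s -> r <= s) /\
  (forall t, A t -> (forall s, S s -> t <= s) -> t <= r).
Definition is_sup_in (A : R -> Prop) (S : R -> Prop) (r : R) : Prop :=
  A r /\ (forall s, S s -> s <= r) /\
  (forall t, A t -> (forall s, S s -> s <= t) -> r <= t).

Record kmodel (A : R -> Prop) : Type := {
  world : Type;
  world_ne : inhabited world;
  rel : world -> world -> Prop;
  val : nat -> world -> R;
  val_in : forall p w, A (val p w)
}.
Arguments world {A}.
Arguments rel {A}.
Arguments val {A}.

(* ev M phi w r : "phi has value r at world w of M" (relational, since the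
   modal clauses are infima/suprema that need not exist a priori). *)
Fixpoint ev {A : R -> Prop} (M : kmodel A) (phi : form) : world M -> R -> Prop :=
  match phi with
  | FVar p => fun w r => r = val M p w
  | FBot => fun _ r => r = 0
  | FTop => fun _ r => r = 1
  | FAnd a b => fun w r => exists x y, ev M a w x /\ ev M b w y /\ r = Rmin x y
  | FOr a b => fun w r => exists x y, ev M a w x /\ ev M b w y /\ r = Rmax x y
  | FMul a b => fun w r => exists x y, ev M a w x /\ ev M b w y /\ r = Rmax 0 (x + y - 1)
  | FImp a b => fun w r => exists x y, ev M a w x /\ ev M b w y /\ r = Rmin 1 (1 - x + y)
  | FBox a => fun w r => is_inf_in A (fun s => exists w', rel M w w' /\ ev M a w' s) r
  | FDia a => fun w r => is_sup_in A (fun s => exists w', rel M w w' /\ ev M a w' s) r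
  end.

Definition safe {A : R -> Prop} (M : kmodel A) : Prop :=
  forall phi w, exists r, ev M phi w r.

Definition transitive_rel {A : R -> Prop} (M : kmodel A) : Prop :=
  forall u v w, rel M u v -> rel M v w -> rel M u w.

Definition holds_in {A : R -> Prop} (M : kmodel A) (G : list form) (phi : form) : Prop :=
  forall v : world M, (forall g, In g G -> ev M g v 1) -> ev M phi v 1.

Definition ent_4KL (G : list form) (phi : form) : Prop :=
  forall M : kmodel A_L, safe M -> transitive_rel M -> holds_in M G phi.

Definition ent_4KomegaL (G : list form) (phi : form) : Prop :=
  forall n : nat, (1 <= n)%nat ->
  forall M : kmodel (A_MV n), safe M -> transitive_rel M -> holds_in M G phi.

(* Main.v *)
Require Import Defs.
From Stdlib Require Import Reals List Lra Lia Classical.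
Import ListNotations.
Open Scope R_scope.

Lemma ev_bound (A : R -> Prop) (HA : forall r, A r -> 0 <= r <= 1) (M : kmodel A) phi :
  forall w r, ev M phi w r -> 0 <= r <= 1.
Proof.
  induction phi; simpl; intros w r H.
  - subst. apply HA, val_in.
  - lra.
  - lra.
  - destruct H as [a [b [Ha [Hb ->]]]]. apply IHphi1 in Ha. apply IHphi2 in Hb.
    unfold Rmin; destruct (Rle_dec a b); lra.
  - destruct H as [a [b [Ha [Hb ->]]]]. apply IHphi1 in Ha. apply IHphi2 in Hb.
    unfold Rmax; destruct (Rle_dec a b); lra.
  - destruct H as [a [b [Ha [Hb ->]]]]. apply IHphi1 in Ha. apply IHphi2 in Hb.
    unfold Rmax; destruct (Rle_dec 0 (a + b - 1)); lra.
  - destruct H as [a [b [Ha [Hb ->]]]]. apply IHphi1 in Ha. apply IHphi2 in Hb.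
    unfold Rmin; destruct (Rle_dec 1 (1 - a + b)); lra.
  - destruct H as [H _]; apply HA; exact H.
  - destruct H as [H _]; apply HA; exact H.
Qed.

Lemma ev_fun (A : R -> Prop) (M : kmodel A) phi :
  forall w r1 r2, ev M phi w r1 -> ev M phi w r2 -> r1 = r2.
Proof.
  induction phi; simpl; intros w r1 r2 H1 H2.
  - congruence.
  - lra.
  - lra.
  - destruct H1 as [a1 [b1 [Ha1 [Hb1 ->]]]]; destruct H2 as [a2 [b2 [Ha2 [Hb2 ->]]]].
    rewrite (IHphi1 _ _ _ Ha1 Ha2), (IHphi2 _ _ _ Hb1 Hb2). reflexivity.
  - destruct H1 as [a1 [b1 [Ha1 [Hb1 ->]]]]; destruct H2 as [a2 [b2 [Ha2 [Hb2 ->]]]].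
    rewrite (IHphi1 _ _ _ Ha1 Ha2), (IHphi2 _ _ _ Hb1 Hb2). reflexivity.
  - destruct H1 as [a1 [b1 [Ha1 [Hb1 ->]]]]; destruct H2 as [a2 [b2 [Ha2 [Hb2 ->]]]].
    rewrite (IHphi1 _ _ _ Ha1 Ha2), (IHphi2 _ _ _ Hb1 Hb2). reflexivity.
  - destruct H1 as [a1 [b1 [Ha1 [Hb1 ->]]]]; destruct H2 as [a2 [b2 [Ha2 [Hb2 ->]]]].
    rewrite (IHphi1 _ _ _ Ha1 Ha2), (IHphi2 _ _ _ Hb1 Hb2). reflexivity.
  - destruct H1 as [A1 [L1 G1]]; destruct H2 as [A2 [L2 G2]].
    apply Rle_antisym; solve [apply G1; assumption | apply G2; assumption].
  - destruct H1 as [A1 [L1 G1]]; destruct H2 as [A2 [L2 G2]].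
    apply Rle_antisym; solve [apply G1; assumption | apply G2; assumption].
Qed.

Lemma iff_fact A (HA : forall r, A r -> 0<=r<=1) (M : kmodel A) w :
  ev M (FIff (FVar 0) (FSq (FBox (FVar 0)))) w 1 ->
  exists b, is_inf_in A (fun s => exists w', rel M w w' /\ s = val M 0 w') b
            /\ val M 0 w = Rmax 0 (b + b - 1).
Proof.
  unfold FIff, FSq. intros [p1 [p2 [Hp1 [Hp2 E]]]].
  pose proof (ev_bound A HA M _ _ _ Hp1) as B1.
  pose proof (ev_bound A HA M _ _ _ Hp2) as B2.
  assert (p1 = 1 /\ p2 = 1) as [-> ->].
  { unfold Rmax in E; destruct (Rle_dec 0 (p1 + p2 - 1)); lra. }
  destruct Hp1 as [x1 [y1 [Hx1 [Hy1 E1]]]].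
  destruct Hp2 as [x2 [y2 [Hx2 [Hy2 E2]]]].
  rewrite (ev_fun A M _ _ _ _ Hx2 Hy1) in E2.
  rewrite (ev_fun A M _ _ _ _ Hy2 Hx1) in E2.
  assert (x1 = y1).
  { unfold Rmin in E1, E2. destruct (Rle_dec 1 (1 - x1 + y1)); destruct (Rle_dec 1 (1 - y1 + x1)); lra. }
  simpl in Hx1. subst x1.
  destruct Hy1 as [b [b' [Hb [Hb' Ey]]]].
  rewrite <- (ev_fun A M _ _ _ _ Hb Hb') in Ey.
  exists b. split; [exact Hb | congruence].
Qed.

Lemma AMV_bound n : (1 <= n)%nat -> forall r, A_MV n r -> 0 <= r <= 1.
Proof.
  intros Hn r [k [Hk ->]].
  assert (0 < INR n) by (apply lt_0_INR; lia).
  assert (INR k <= INR n) by (apply le_INR; exact Hk).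
  assert (0 <= INR k) by apply pos_INR.
  split.
  - unfold Rdiv; apply Rmult_le_pos; [lra| left; apply Rinv_0_lt_compat; lra].
  - apply Rmult_le_reg_r with (INR n); [lra|]. unfold Rdiv; rewrite Rmult_assoc, Rinv_l; lra.
Qed.

Lemma div_le n a b : (1 <= n)%nat -> (a <= b)%nat -> INR a / INR n <= INR b / INR n.
Proof.
  intros. unfold Rdiv. apply Rmult_le_compat_r.
  left; apply Rinv_0_lt_compat, lt_0_INR; lia. apply le_INR; auto.
Qed.

Lemma div_lt n a b : (1 <= n)%nat -> (a < b)%nat -> INR a / INR n < INR b / INR n.
Proof.
  intros. unfold Rdiv. apply Rmult_lt_compat_r.
  apply Rinv_0_lt_compat, lt_0_INR; lia. apply lt_INR; auto.
Qed.

Lemma div_lt_nat n a b : (1 <= n)%nat -> INR a / INR n < INR b / INR n -> (a < b)%nat.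
Proof.
  intros Hn H. destruct (Nat.le_gt_cases b a) as [h|h]; auto.
  pose proof (div_le n b a Hn h). lra.
Qed.

Lemma div_nn n : (1 <= n)%nat -> INR n / INR n = 1.
Proof. intros. field. apply not_0_INR. lia. Qed.

Lemma AMV1 n : (1 <= n)%nat -> A_MV n 1.
Proof. intros. exists n. split; [lia| symmetry; apply div_nn; auto]. Qed.

Lemma attain n (Hn : (1<=n)%nat) (P : R -> Prop) b :
  (forall s, P s -> A_MV n s) -> (exists s, P s) -> is_inf_in (A_MV n) P b -> P b.
Proof.
  intros HS [s0 Hs0] [Ab [Lb Gb]].
  apply NNPP; intro Hnb.
  assert (Hlt : forall s, P s -> b < s).
  { intros s Hs. destruct (Lb s Hs) as [h|h]; [exact h|].
    exfalso; apply Hnb; rewrite h; exact Hs. }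
  destruct Ab as [kb [Hkb Eb]].
  destruct (HS s0 Hs0) as [k0 [Hk0 E0]].
  assert (kb < k0)%nat.
  { apply (div_lt_nat n); auto. rewrite <- Eb, <- E0. apply Hlt; auto. }
  assert (INR (S kb) / INR n <= b).
  { apply Gb.
    - exists (S kb). split; [lia|reflexivity].
    - intros s Hs. destruct (HS s Hs) as [ks [Hks Es]].
      assert (kb < ks)%nat.
      { apply (div_lt_nat n); auto. rewrite <- Eb, <- Es. apply Hlt; auto. }
      rewrite Es. apply div_le; auto. }
  pose proof (div_lt n kb (S kb) Hn (Nat.lt_succ_diag_r kb)). lra.
Qed.

Lemma part1 : ent_4KomegaL [FIff (FVar 0) (FSq (FBox (FVar 0)));
   FBox (FIff (FVar 0) (FSq (FBox (FVar 0)))); FNeg (FDia (FBox FBot))]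
   (FOr (FNeg (FVar 0)) (FVar 0)).
Proof.
  intros n Hn M Hsafe Htr v HG.
  pose proof (AMV_bound n Hn) as HA.
  assert (H1 := HG _ (or_introl eq_refl)).
  assert (H2 := HG _ (or_intror (or_introl eq_refl))).
  assert (H3 := HG _ (or_intror (or_intror (or_introl eq_refl)))).
  clear HG.
  assert (Hcone : forall w, rel M v w -> ev M (FIff (FVar 0) (FSq (FBox (FVar 0)))) w 1).
  { intros w Hw. destruct (Hsafe (FIff (FVar 0) (FSq (FBox (FVar 0)))) w) as [s Hs].
    destruct H2 as [_ [L2 _]].
    assert (1 <= s) by (apply L2; exists w; auto).
    pose proof (ev_bound _ HA M _ _ _ Hs).
    replace 1 with s by lra. exact Hs. }
  assert (Hsucc : forall w, rel M v w -> exists w', rel M w w').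
  { intros w Hw. unfold FNeg in H3.
    destruct H3 as [p [q [Hp [Hq E]]]]. simpl in Hq. subst q.
    assert (p <= 0) by (unfold Rmin in E; destruct (Rle_dec 1 (1 - p + 0)); lra).
    destruct Hp as [_ [Lp _]].
    destruct (Hsafe (FBox FBot) w) as [s Hs].
    assert (s <= p) by (apply Lp; exists w; auto).
    apply NNPP; intro Hno.
    destruct Hs as [_ [_ Gs]].
    assert (1 <= s).
    { apply Gs. apply AMV1; auto. intros s' [w'' [Hw'' _]]. exfalso; apply Hno; eauto. }
    lra. }
  assert (Hcl : forall m w k, rel M v w -> val M 0 w = INR k / INR n -> (n - k <= m)%nat ->
                 val M 0 w = 0 \/ val M 0 w = 1).
  { induction m as [|m IH]; intros w k Hw Ek Hm.
    - right. pose proof (HA _ (val_in _ M 0 w)).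
      pose proof (div_le n n k Hn ltac:(lia)). rewrite div_nn in H0; auto. lra.
    - destruct (iff_fact _ HA M w (Hcone w Hw)) as [b [Hb Eb]].
      destruct (Hsucc w Hw) as [w1 Hw1].
      assert (Sb : exists w', rel M w w' /\ b = val M 0 w').
      { apply (attain n Hn (fun s => exists w', rel M w w' /\ s = val M 0 w')); auto.
        - intros s [w' [_ ->]]. apply val_in.
        - exists (val M 0 w1), w1. auto. }
      destruct Sb as [w' [Hww' Eb']].
      assert (Hv' : rel M v w') by (eapply Htr; eauto).
      pose proof (HA _ (val_in _ M 0 w)).
      pose proof (HA _ (val_in _ M 0 w')).
      destruct (classic (val M 0 w = 0 \/ val M 0 w = 1)) as [h|h]; [exact h|exfalso].
      assert (0 < val M 0 w < 1) by lra.
      assert (Hbw : val M 0 w < b /\ b <> 0 /\ b <> 1).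
      { unfold Rmax in Eb; destruct (Rle_dec 0 (b + b - 1)); lra. }
      destruct (val_in _ M 0 w') as [kb [Hkb Ekb]].
      assert (k < kb)%nat.
      { apply (div_lt_nat n); auto. rewrite <- Ek, <- Ekb, <- Eb'. lra. }
      assert (k < n)%nat.
      { apply (div_lt_nat n); auto. rewrite <- Ek, div_nn; auto. lra. }
      destruct (IH w' kb Hv' Ekb ltac:(lia)); lra. }
  destruct (iff_fact _ HA M v H1) as [b [Hb Eb]].
  assert (b = 0 \/ b = 1) as Hb01.
  { destruct (classic (exists w, rel M v w)) as [[w1 Hw1]|Hno].
    - assert (Sb : exists w', rel M v w' /\ b = val M 0 w').
      { apply (attain n Hn (fun s => exists w', rel M v w' /\ s = val M 0 w')); auto.
        - intros s [w' [_ ->]]. apply val_in.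
        - exists (val M 0 w1), w1. auto. }
      destruct Sb as [w' [Hw' ->]].
      destruct (val_in _ M 0 w') as [k [Hk Ek]].
      apply (Hcl (n - k)%nat w' k Hw' Ek). lia.
    - right. destruct Hb as [Ab [_ Gb]].
      pose proof (HA _ Ab).
      assert (1 <= b).
      { apply Gb. apply AMV1; auto. intros s [w [Hw _]]. exfalso; eauto. }
      lra. }
  assert (Hv : val M 0 v = 0 \/ val M 0 v = 1).
  { rewrite Eb. unfold Rmax; destruct (Rle_dec 0 (b + b - 1)); lra. }
  unfold FNeg. simpl.
  exists (Rmin 1 (1 - val M 0 v + 0)), (val M 0 v).
  split; [exists (val M 0 v), 0; auto|].
  split; [reflexivity|].
  destruct Hv as [E|E]; rewrite E; unfold Rmin, Rmax; repeat destruct Rle_dec; lra.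
Qed.

Lemma sup_exists (S : R -> Prop) : (forall s, S s -> 0<=s<=1) -> exists r, is_sup_in A_L S r.
Proof.
  intros HS. destruct (classic (exists s, S s)) as [Hne|Hno].
  - destruct (completeness S) as [m [Hub Hlub]].
    + exists 1. intros s Hs. apply HS; auto.
    + exact Hne.
    + exists m. destruct Hne as [s0 Hs0]. split; [split|split].
      * pose proof (Hub s0 Hs0); pose proof (HS s0 Hs0); lra.
      * apply Hlub. intros s Hs. apply HS; auto.
      * exact Hub.
      * intros t _ Ht. apply Hlub. exact Ht.
  - exists 0. split; [unfold A_L; lra| split].
    + intros s Hs. exfalso; eauto.
    + intros t [Ht _] _. exact Ht.
Qed.

Lemma inf_exists (S : R -> Prop) : (forall s, S s -> 0<=s<=1) -> exists r, is_inf_in A_L S r.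
Proof.
  intros HS.
  destruct (sup_exists (fun u => S (1 - u))) as [m [Am [Um Gm]]].
  { intros u Hu. pose proof (HS _ Hu). lra. }
  exists (1 - m). unfold A_L in *. split; [lra|split].
  - intros s Hs. assert (1 - s <= m); [|lra]. apply Um.
    replace (1 - (1 - s)) with s by ring. exact Hs.
  - intros t Ht Hl. assert (m <= 1 - t); [|lra]. apply Gm. lra.
    intros u Hu. pose proof (Hl _ Hu). lra.
Qed.

Lemma safe_L (M : kmodel A_L) : safe M.
Proof.
  intros phi. induction phi; intros w; simpl.
  - eexists; reflexivity.
  - exists 0; reflexivity.
  - exists 1; reflexivity.
  - destruct (IHphi1 w) as [a Ha]; destruct (IHphi2 w) as [b Hb].
    eexists; exists a, b; repeat split; try eassumption.
  - destruct (IHphi1 w) as [a Ha]; destruct (IHphi2 w) as [b Hb].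
    eexists; exists a, b; repeat split; try eassumption.
  - destruct (IHphi1 w) as [a Ha]; destruct (IHphi2 w) as [b Hb].
    eexists; exists a, b; repeat split; try eassumption.
  - destruct (IHphi1 w) as [a Ha]; destruct (IHphi2 w) as [b Hb].
    eexists; exists a, b; repeat split; try eassumption.
  - apply inf_exists. intros s [w' [_ Hs]]. eapply (ev_bound A_L (fun r h => h)); exact Hs.
  - apply sup_exists. intros s [w' [_ Hs]]. eapply (ev_bound A_L (fun r h => h)); exact Hs.
Qed.

Definition xv (i : nat) : R := 1 - (/2) ^ (S i).

Lemma half_pow k : 0 < (/2) ^ k <= 1.
Proof. induction k; simpl; lra. Qed.

Lemma half_decr m k : (/2) ^ (m + k) <= (/2) ^ m.
Proof.
  induction k.
  - rewrite Nat.add_0_r; lra.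
  - rewrite Nat.add_succ_r. simpl. pose proof (half_pow (m + k)). lra.
Qed.

Lemma xv_bound i : 0 <= xv i <= 1.
Proof. unfold xv. pose proof (half_pow (S i)). lra. Qed.

Lemma xv_mono i j : (i <= j)%nat -> xv i <= xv j.
Proof.
  intros H. unfold xv. replace (S j) with (S i + (j - i))%nat by lia.
  pose proof (half_decr (S i) (j - i)). lra.
Qed.

Lemma xv_rel i : xv i = Rmax 0 (xv (S i) + xv (S i) - 1).
Proof.
  unfold xv. simpl. pose proof (half_pow i).
  unfold Rmax; destruct Rle_dec; lra.
Qed.

Definition Mex : kmodel A_L :=
  {| world := nat; world_ne := inhabits 0%nat; rel := fun i j => (i < j)%nat;
     val := fun _ i => xv i; val_in := fun _ i => xv_bound i |}.

Lemma part2 : ~ ent_4KL [FIff (FVar 0) (FSq (FBox (FVar 0)));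
   FBox (FIff (FVar 0) (FSq (FBox (FVar 0)))); FNeg (FDia (FBox FBot))]
   (FOr (FNeg (FVar 0)) (FVar 0)).
Proof.
  intro H.
  assert (Htr : transitive_rel Mex) by (intros u v w; simpl; lia).
  specialize (H Mex (safe_L Mex) Htr 0%nat).
  assert (Hbox : forall i, ev Mex (FBox (FVar 0)) i (xv (S i))).
  { intro i. simpl. split; [apply xv_bound|split].
    - intros s [j [Hj ->]]. apply xv_mono; lia.
    - intros t _ Ht. apply Ht. exists (S i). split; [lia|reflexivity]. }
  assert (Hiff : forall i, ev Mex (FIff (FVar 0) (FSq (FBox (FVar 0)))) i 1).
  { intro i. unfold FIff, FSq. exists 1, 1. split; [|split].
    - exists (xv i), (xv i). split; [reflexivity|split].
      + exists (xv (S i)), (xv (S i)). split; [apply Hbox|split; [apply Hbox|apply xv_rel]].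
      + unfold Rmin; destruct Rle_dec; lra.
    - exists (xv i), (xv i). split; [|split; [reflexivity|]].
      + exists (xv (S i)), (xv (S i)). split; [apply Hbox|split; [apply Hbox|apply xv_rel]].
      + unfold Rmin; destruct Rle_dec; lra.
    - unfold Rmax; destruct Rle_dec; lra. }
  assert (Hc : ev Mex (FOr (FNeg (FVar 0)) (FVar 0)) 0%nat 1).
  { apply H. intros g Hg. simpl in Hg. destruct Hg as [<-|[<-|[<-|[]]]].
    - apply Hiff.
    - split; [unfold A_L; lra|split].
      + intros s [j [_ Hs]]. rewrite (ev_fun _ _ _ _ _ _ Hs (Hiff j)). lra.
      + intros t [_ Ht1] _. exact Ht1.
    - unfold FNeg. exists 0, 0. split; [|split; [reflexivity|unfold Rmin; destruct Rle_dec; lra]].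
      split; [unfold A_L; lra|split].
      + intros s [j [_ Hs]]. destruct Hs as [_ [Ls _]].
        apply Ls. exists (S j). split; [simpl; lia|reflexivity].
      + intros t [Ht0 _] _. exact Ht0. }
  destruct Hc as [a [c [Ha [Hc E]]]].
  destruct Ha as [x0 [y0 [Hx0 [Hy0 Ea]]]]. simpl in *. unfold xv in *. simpl in *.
  subst. unfold Rmin, Rmax in *. repeat destruct Rle_dec; lra.
Qed.

Theorem mainTheorem5 :
  let x := FVar 0 in
  let G := [FIff x (FSq (FBox x)); FBox (FIff x (FSq (FBox x))); FNeg (FDia (FBox FBot))] in
  ent_4KomegaL G (FOr (FNeg x) x) /\ ~ ent_4KL G (FOr (FNeg x) x).
Proof.
  intros x G. split; [exact part1 | exact part2].
Qed.
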